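(* For every positive integer $k$ there exists a scoring rule $f$ (assigning to each item $i$ of an instance a score $f(i,\mathcal{A}_n)\ge 0$, not required to depend on the approval profile) such that the price of justified representation $P(k,f)=\sup_{\mathcal{I}_{m,\mathcal{A}_n,k}} P(\mathcal{I}_{m,\mathcal{A}_n,k},f)$ is unbounded (i.e. equals $+\infty$).
   Context: An instance $\mathcal{I}_{m,\mathcal{A}_n,k}=\langle m,\mathcal{A}_n,k\rangle$ consists of a set of items (comments) $[m]=\{1,\dots,m\}$, a set of users $[n]$, an approval profile $\mathcal{A}_n=(A_1,\dots,A_n)$ with $A_u\subseteq[m]$ the set of items approved by user $u$, and a target size $k\le m$. A scoring rule assigns each item $i$ a score $f(i,\mathcal{A}_n)\ge 0$; scores of sets are additive: $f(S)=\sum_{i\in S}f(i,\mathcal{A}_n)$. A group of users $G\subseteq[n]$ is cohesive if $\bigcap_{u\in G}A_u\neq\emptyset$. A set $S\subseteq[m]$ represents $G$ if some $u\in G$ has $A_u\cap S\neq\emptyset$. A set $S$ satisfies justified representation (JR) if $|S|=k$ and $S$ represents every cohesive group of at least $n/k$ users. Let $S^*$ be a set maximizing $f(S)$ over all $S\subseteq[m]$ with $|S|=k$, and $S^*_{JR}$ a set maximizing $f(S)$ over all sets satisfying JR. The price of JR on an instance is $P(\mathcal{I}_{m,\mathcal{A}_n,k},f)=f(S^* )/f(S^*_{JR})$, and $P(k,f)=\max_{\mathcal{I}_{m,\mathcal{A}_n,k}}P(\mathcal{I}_{m,\mathcal{A}_n,k},f)$ over all instances with set size $k$. *)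

(* Defs.v *)
From HB Require Import structures.
From mathcomp Require Import all_boot all_order all_algebra.
From mathcomp Require Import reals.
Set Implicit Arguments. Unset Strict Implicit. Unset Printing Implicit Defensive.
Import Order.TTheory GRing.Theory Num.Theory.
Local Open Scope ring_scope.

Definition profile (m n : nat) := {ffun 'I_n -> {set 'I_m}}.

Definition scoring_rule (R : realType) :=
  forall (m n : nat), profile m n -> 'I_m -> R.

Definition nonneg_rule (R : realType) (f : scoring_rule R) : Prop :=
  forall m n (A : profile m n) (i : 'I_m), 0 <= f m n A i.

Definition set_score (R : realType) (f : scoring_rule R) m n (A : profile m n)
  (S : {set 'I_m}) : R := \sum_(i in S) f m n A i.

Definition cohesive m n (A : profile m n) (G : {set 'I_n}) : bool :=
  (\bigcap_(u in G) A u) != set0.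

Definition represents m n (A : profile m n) (S : {set 'I_m}) (G : {set 'I_n}) : bool :=
  [exists u in G, A u :&: S != set0].

(* justified representation; |G| >= n/k is written n <= |G| * k (k > 0) *)
Definition JR m n (A : profile m n) (k : nat) (S : {set 'I_m}) : Prop :=
  #|S| = k /\
  forall G : {set 'I_n}, cohesive A G -> (n <= #|G| * k)%N -> represents A S G.

(* Main.v *)
Require Import Defs.
From HB Require Import structures.
From mathcomp Require Import all_boot all_order all_algebra.
From mathcomp Require Import reals.
Import Order.TTheory GRing.Theory Num.Theory.
Local Open Scope ring_scope.

Theorem proposition1 (R : realType) (k : nat) : (0 < k)%N ->
  exists f : scoring_rule R, nonneg_rule f /\
    forall B : R, exists (m n : nat) (A : profile m n),
      [/\ (0 < n)%N, (k <= m)%N,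
          (exists S : {set 'I_m}, JR A k S) &
          exists S0 : {set 'I_m}, #|S0| = k /\
            forall S : {set 'I_m}, JR A k S ->
              B * set_score f A S < set_score f A S0].
Proof.
move=> k0.
exists (fun m n (A : profile m n) (i : 'I_m) => if (i < n)%N then (0:R) else 1).
split; first by move=> m n A i /=; case: ifP.
move=> B.
pose A : profile (k + k) k := [ffun u => [set lshift k u]].
pose L := [set lshift k u | u in [set: 'I_k]].
have cL : #|L| = k by rewrite card_imset ?cardsT ?card_ord //; exact: lshift_inj.
have key : forall S : {set 'I_(k+k)}, JR A k S -> S = L.
  move=> S [cS HS]; apply/eqP; rewrite eq_sym eqEcard cS cL leqnn andbT.
  apply/subsetP=> _ /imsetP [u _ ->].
  have := HS [set u]; rewrite /cohesive big_set1 ffunE cards1 mul1n leqnn.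
  have -> : ([set lshift k u] != set0) by apply/set0Pn; exists (lshift k u); rewrite inE.
  move=> /(_ isT isT) /existsP [v /andP [/set1P -> ]].
  rewrite ffunE => /set0Pn [x /setIP [/set1P -> //]].
exists (k + k)%N, k, A; split => //.
- by rewrite leq_addr.
- exists L; split => // G cG HG.
  have : G != set0.
    apply/negP=> /eqP G0; move: HG; rewrite G0 cards0 mul0n leqn0.
    by move/eqP=> k00; rewrite k00 in k0.
  case/set0Pn=> u uG; apply/existsP; exists u; rewrite uG /=.
  apply/set0Pn; exists (lshift k u); rewrite ffunE !inE eqxx /=.
  by apply/imsetP; exists u.
- exists [set rshift k u | u in [set: 'I_k]]; split.
    by rewrite card_imset ?cardsT ?card_ord //; exact: rshift_inj.
  move=> S /key ->.
  rewrite /set_score.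
  have -> : \sum_(i in L) (if (i < k)%N then (0:R) else 1) = 0.
    by apply: big1 => _ /imsetP [u _ ->] /=; rewrite ltn_ord.
  rewrite mulr0 big_imset /=; last by move=> x y _ _; exact: rshift_inj.
  rewrite (eq_bigr (fun _ => 1)); last by move=> i _; rewrite ltnNge leq_addr.
  by rewrite sumr_const cardsT card_ord ltr0n.
Qed.
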